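(* A series $f=\sum_t\mathsf{G}_t(f)\,t\in G_{\operatorname{NAP}}$ lies in the image of the subgroup $\operatorname{Spec}H_{\operatorname{NAP}}$ (i.e. is of the form $\chi\circ\rho$, viewed through its coordinates $\mathsf{G}_t(f)=\chi(\rho(\mathsf{G}_t))$, for a character $\chi$ of $H_{\operatorname{NAP}}$) if and only if for every rooted tree $t=B(r,t_1,\dots,t_k)$ one has $$\#\operatorname{Aut}(B(r,t_1,\dots,t_k))\,\mathsf{G}_{B(r,t_1,\dots,t_k)}(f)=\prod_{i=1}^k\#\operatorname{Aut}(B(r,t_i))\,\mathsf{G}_{B(r,t_i)}(f).$$
   Context: $\operatorname{NAP}(I)$ is the set of rooted trees on vertex set $I$; composition $t\circ(s_i)_{i\in I}$ is the disjoint union of the $s_i$ plus, for each edge $i$–$i'$ of $t$, an edge between the roots of $s_i$ and $s_{i'}$, with root the root of $s_k$ for $k$ the root of $t$. Coinvariants are unlabeled rooted trees; $\operatorname{Aut}(t)$ is the automorphism group of the rooted tree $t$. $B(r,t_1,\dots,t_k)$ is the tree obtained by adding a new root $r$ joined to the roots of the $t_i$. $G_{\operatorname{NAP}}$ is the group of formal series $f=\sum_t\mathsf{G}_t(f)t$ over unlabeled rooted trees with coefficient $1$ on the one-vertex tree, with product $\alpha\times\beta=\sum_m\sum_{n_1,\dots,n_m}\langle x_m\circ(y_{n_1},\dots,y_{n_m})\rangle$, $x_m,y_n$ being labelled representatives of the degree-$m$ (resp. $n$) parts of $\alpha$, $\beta$, composition extended multilinearly and $\langle\cdot\rangle$ passing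 to unlabeled trees. $\mathbb{Q}[G_{\operatorname{NAP}}]$ is the free commutative Hopf algebra of coordinate functions $\mathsf{G}_t$. $\Pi_{\operatorname{NAP}}(I)$ is the poset of forests on $I$ where $y$ covers $x$ iff $y$ is obtained by joining the root of one component to the root of another; $H_{\operatorname{NAP}}$ is Schmitt's incidence Hopf algebra of the intervals $[\widehat{0},t]$ (basis indexed by isomorphism classes of finite products of such intervals, product from direct product, coproduct $\Delta\mathsf{F}_{[Q]}=\sum_{x\in Q}\mathsf{F}_{[\widehat{0},x]}\otimes\mathsf{F}_{[x,\widehat{1}]}$), $\mathsf{F}_{[t]}$ the element for $[\widehat{0},t]$. $\rho:\mathbb{Q}[G_{\operatorname{NAP}}]\to H_{\operatorname{NAP}}$ is the surjective Hopf algebra morphism with $\rho(\mathsf{G}_t)=\mathsf{F}_{[t]}/\#\operatorname{Aut}(t)$, through which $\operatorname{Spec}H_{\operatorname{NAP}}$ is a subgroup of $G_{\operatorname{NAP}}$. *)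

(* Defs.v *)
From HB Require Import structures.
From mathcomp Require Import all_boot all_order all_algebra.
From mathcomp Require Import fingroup perm.
Set Implicit Arguments. Unset Strict Implicit. Unset Printing Implicit Defensive.
Import GRing.Theory.
Local Open Scope ring_scope.

(* ---------- Rooted trees / forests on a finite vertex set I ----------------
   A forest on I is encoded by its parent map p : I -> I: roots are the fixed
   points of p, every other vertex v has the edge v -- p v, and there are no
   cycles other than fixed points (iterating #|I| times lands on a root). *)

Definition is_forest (I : finType) (p : {ffun I -> I}) : bool :=
  [forall x, p (iter #|I| p x) == iter #|I| p x].

Definition is_tree (I : finType) (p : {ffun I -> I}) : bool :=
  is_forest p && (#|[pred x | p x == x]| == 1)%N.

Definition nAut (I : finType) (p : {ffun I -> I}) : nat :=
  #|[set s : {perm I} | [forall x, s (p x) == p (s x)]]|.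

Record ltree := LTree { ltV : finType; ltp : {ffun ltV -> ltV} }.

Definition tree (t : ltree) : bool := is_tree (ltp t).

(* Isomorphism of labelled rooted trees (unlabelled trees = iso classes). *)
Definition tree_iso (t1 t2 : ltree) : Prop :=
  exists (g : ltV t1 -> ltV t2) (h : ltV t2 -> ltV t1),
    [/\ cancel g h, cancel h g & forall x, g (ltp t1 x) = ltp t2 (g x)].

Definition desc (I : finType) (p : {ffun I -> I}) (c x : I) : bool :=
  [exists n : 'I_#|I|.+1, iter n p x == c].

Definition branch_set (I : finType) (p : {ffun I -> I}) (r c : I) : pred I :=
  fun x => (x == r) || desc p c x.

Lemma branch_set_root (I : finType) (p : {ffun I -> I}) (r c : I) :
  branch_set p r c r.
Proof. by rewrite /branch_set eqxx. Qed.

Definition branch_type (I : finType) (p : {ffun I -> I}) (r c : I) : finType :=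
  {x : I | branch_set p r c x}.

Definition branch_root (I : finType) (p : {ffun I -> I}) (r c : I) :
  branch_type p r c := exist _ r (branch_set_root p r c).

(* the rooted tree induced on {r} u (vertices of the subtree rooted at c) *)
Definition branch (t : ltree) (r c : ltV t) : ltree :=
  @LTree (branch_type (ltp t) r c)
    [ffun x : branch_type (ltp t) r c =>
       insubd (branch_root (ltp t) r c) (ltp t (val x))].

Definition nap_cover (I : finType) (x y : {ffun I -> I}) : Prop :=
  is_forest x /\
  exists a b : I, [/\ a != b, x a = a, x b = b &
                      y = [ffun v => if v == a then b else x v]].

Inductive nap_le (I : finType) : {ffun I -> I} -> {ffun I -> I} -> Prop :=
| nap_le_refl x : is_forest x -> nap_le x x
| nap_le_step x y z : nap_cover x y -> nap_le y z -> nap_le x z.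

Definition nap_bot (I : finType) : {ffun I -> I} := [ffun v => v].

Record poset := Poset { pcar : Type; ple : pcar -> pcar -> Prop }.

Definition poset_iso (P Q : poset) : Prop :=
  exists (g : pcar P -> pcar Q) (h : pcar Q -> pcar P),
    [/\ cancel g h, cancel h g & forall a b, ple a b <-> ple (g a) (g b)].

Definition unit_poset : poset := @Poset unit (fun _ _ => True).

Definition prod_poset (P Q : poset) : poset :=
  @Poset (pcar P * pcar Q)%type (fun a b => ple a.1 b.1 /\ ple a.2 b.2).

Definition interval_poset (t : ltree) : poset :=
  @Poset {x : {ffun ltV t -> ltV t} | nap_le (@nap_bot (ltV t)) x /\ nap_le x (ltp t)}
    (fun x y => nap_le (proj1_sig x) (proj1_sig y)).

Definition prod_intervals (L : seq ltree) : poset :=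
  foldr (fun t P => prod_poset (interval_poset t) P) unit_poset L.

Definition tree_list (L : seq ltree) : bool := all tree L.

(* ---------- Characters of H_NAP --------------------------------------------
   As an algebra, H_NAP is the monoid algebra (over Q) of isomorphism classes
   of finite products of intervals [0^, t], with product the direct product
   and unit the one-point poset (empty product).  A character (algebra
   morphism H_NAP -> Q) is therefore exactly a function on finite lists of
   rooted trees (t_1, ..., t_k) (standing for the class of
   [0^,t_1] x ... x [0^,t_k]) which is invariant under poset isomorphism,
   multiplicative w.r.t. concatenation, and sends the empty product to 1.
   chi [:: t] is the value chi(F_[t]). *)
Definition HNAP_character (chi : seq ltree -> rat) : Prop :=
  [/\ chi [::] = 1,
      (forall L1 L2, tree_list L1 -> tree_list L2 ->
         chi (L1 ++ L2) = chi L1 * chi L2) &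
      (forall L1 L2, tree_list L1 -> tree_list L2 ->
         poset_iso (prod_intervals L1) (prod_intervals L2) -> chi L1 = chi L2)].

(* ---------- Elements of G_NAP ---------------------------------------------
   A series f = sum_t G_t(f) t over unlabelled rooted trees is represented by
   its coefficient function G_(.)(f) on labelled rooted trees, required to be
   invariant under isomorphism, with coefficient 1 on the one-vertex tree. *)
Definition in_GNAP (f : ltree -> rat) : Prop :=
  (forall t1 t2, tree t1 -> tree t2 -> tree_iso t1 t2 -> f t1 = f t2) /\
  (forall t, tree t -> #|ltV t| = 1%N -> f t = 1).

(* f lies in the image of Spec H_NAP under rho^*:
   G_t(f) = chi(rho(G_t)) = chi(F_[t]) / #Aut(t) for some character chi. *)
Definition in_image_SpecHNAP (f : ltree -> rat) : Prop :=
  exists chi, HNAP_character chi /\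
    forall t, tree t -> f t = chi [:: t] / (nAut (ltp t))%:R.

Arguments branch : clear implicits.

(* Main.v *)
Require Import Defs.
From HB Require Import structures.
From mathcomp Require Import all_boot all_order all_algebra.
From mathcomp Require Import fingroup perm.
From Stdlib Require Import ProofIrrelevance Setoid.

Module Part1.
Set Implicit Arguments. Unset Strict Implicit. Unset Printing Implicit Defensive.
Import GRing.Theory.

Section Forest.
Variables (T : finType) (q : T -> T).

Definition acyc := forall n x, iter n q x = x -> n = 0 \/ q x = x.
Definition anc (u x : T) := exists n, iter n q x = u.

Lemma iter_fix n y : q y = y -> iter n q y = y.
Proof. by move=> hy; elim: n => //= n ->. Qed.

Lemma forest_fix x : [forall y, q (iter #|T| q y) == iter #|T| q y] ->
  q (iter #|T| q x) = iter #|T| q x.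
Proof. by move/forallP/(_ x)/eqP. Qed.

Lemma iter_ge (F : [forall y, q (iter #|T| q y) == iter #|T| q y]) m x :
  #|T| <= m -> iter m q x = iter #|T| q x.
Proof.
move=> hm; rewrite -(subnK hm) iterD; apply: iter_fix; exact: forest_fix.
Qed.

Lemma forest_acyc : is_forest (finfun q) -> acyc.
Proof.
move=> F0.
have F : [forall y, q (iter #|T| q y) == iter #|T| q y].
  apply/forallP => y; move/forallP: F0 => /(_ y).
  by rewrite ffunE (eq_iter (ffunE q)).
move=> n x hx; case: n hx => [|n] hx; first by left.
right.
have hk : forall k, iter (k * n.+1) q x = x.
  elim=> [|k IH] //; by rewrite mulSn iterD IH hx.
have := hk #|T|; rewrite iter_ge; last by rewrite leq_pmulr.
move=> <-; exact: forest_fix.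
exact: F.
Qed.

Lemma acyc_forestP : acyc -> forall x, q (iter #|T| q x) = iter #|T| q x.
Proof.
move=> A x.
pose g (k : 'I_#|T|.+1) := iter k q x.
have : ~~ injectiveb g.
  apply/negP => /injectiveP /leq_card; by rewrite card_ord ltnn.
case/injectivePn => i [j] nij hij.
wlog lt : i j nij hij / i < j.
  move=> W; case: (ltngtP i j) => h; first exact: W h.
    by apply: (W j i) => //; rewrite eq_sym.
  by move: nij; rewrite (val_inj h) eqxx.
have hr : q (iter i q x) = iter i q x.
  have := A (j - i) (iter i q x); rewrite -iterD subnK ?(ltnW lt) //.
  move=> /(_ (esym hij)) [|//]; by move/eqP; rewrite subn_eq0 leqNgt lt.
have hi : i <= #|T| by rewrite -ltnS.
by rewrite -(subnK hi) iterD iter_fix.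
Qed.

Lemma acyc_forest : acyc -> is_forest (finfun q).
Proof.
move=> A; apply/forallP => y; rewrite ffunE (eq_iter (ffunE q)).
by rewrite (acyc_forestP A).
Qed.

Variable A : acyc.

Lemma FF : [forall y, q (iter #|T| q y) == iter #|T| q y].
Proof. by apply/forallP => y; rewrite acyc_forestP. Qed.

Lemma anc_refl x : anc x x. Proof. by exists 0. Qed.
Lemma anc_q x : anc (q x) x. Proof. by exists 1. Qed.
Lemma anc_trans u v x : anc u v -> anc v x -> anc u x.
Proof. by move=> [m hm] [n hn]; exists (m + n); rewrite iterD hn. Qed.
Lemma anc_qx u x : anc u (q x) -> anc u x.
Proof. by move=> h; apply: anc_trans h (anc_q x). Qed.

Lemma anc_antisym a b : anc a b -> anc b a -> a = b.
Proof.
move=> [m hm] [n hn].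
have : iter (n + m) q b = b by rewrite iterD hm.
case/A.
  by move/eqP; rewrite addn_eq0 => /andP[_ /eqP m0]; rewrite -hm m0.
by move=> hb; rewrite -hm iter_fix.
Qed.

Lemma anc_root u r : q r = r -> anc u r -> u = r.
Proof. by move=> hr [n <-]; rewrite iter_fix. Qed.

Lemma anc_strict u x : anc u x -> u <> x -> anc u (q x).
Proof.
move=> [[|n] hn] hux; first by rewrite -hn in hux.
by exists n; rewrite -iterSr.
Qed.

Lemma anc_cover u x : q x <> x -> anc u x -> u <> x ->
  (forall z, anc z x -> z <> x -> anc z u) -> u = q x.
Proof.
move=> hx hu hux H; apply: anc_antisym; first exact: anc_strict.
by apply: H; [exact: anc_q|].
Qed.

Lemma descP c x : reflect (anc c x) (desc (finfun q) c x).
Proof.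
apply: (iffP existsP).
  by move=> [n /eqP]; rewrite (eq_iter (ffunE q)) => h; exists n.
move=> [n hn]; case: (leqP n #|T|) => h.
  by exists (Ordinal (h : n < #|T|.+1)); rewrite (eq_iter (ffunE q)) hn.
exists (Ordinal (ltnSn #|T|)); rewrite (eq_iter (ffunE q)) /=.
by rewrite -(iter_ge FF _ (ltnW h)) hn.
Qed.

Lemma dep_ex x : exists n, q (iter n q x) == iter n q x.
Proof. by exists #|T|; rewrite acyc_forestP. Qed.

Definition dep x := ex_minn (dep_ex x).

Lemma dep_lt z : q z != z -> dep (q z) < dep z.
Proof.
move=> hz; rewrite /dep; case: ex_minnP => m _ hm.
case: ex_minnP => k hk _.
case: k hk => [|k] hk; first by rewrite /= (negbTE hz) in hk.
by apply: hm; rewrite -iterSr.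
Qed.

End Forest.

End Part1.
Import Part1.

Module Part2.
Set Implicit Arguments. Unset Strict Implicit. Unset Printing Implicit Defensive.
Import GRing.Theory.

Section Good.
Variables (T : finType) (q : T -> T).
Definition goodb (S : {set T}) : bool :=
  (S \subset [set v | q v != v]) && [forall z, (q z \in S) ==> (z \in S)].
Definition Gtype := {S : {set T} | goodb S}.
Definition Gposet := @Poset Gtype (fun A B => val A \subset val B).

Lemma goodP (S : {set T}) : reflect ((forall v, v \in S -> q v != v) /\
   (forall z, q z \in S -> z \in S)) (goodb S).
Proof.
apply: (iffP andP) => [[/subsetP h /forallP h2]|[h h2]]; split.
- by move=> v /h; rewrite inE.
- by move=> z; move: (h2 z) => /implyP.
- by apply/subsetP => v /h; rewrite inE.
- by apply/forallP => z; apply/implyP; apply: h2.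
Qed.

Lemma good0 : goodb set0.
Proof. by apply/goodP; split => v; rewrite inE. Qed.
Definition G0 : Gtype := Sub set0 good0.
End Good.

Lemma ffun_forest (I : finType) (x : {ffun I -> I}) :
  is_forest x -> acyc x.
Proof. by move=> F; apply: forest_acyc; rewrite ffunK. Qed.

Lemma forest_ffun (I : finType) (x : {ffun I -> I}) :
  acyc x -> is_forest x.
Proof. by move=> A; have := acyc_forest A; rewrite ffunK. Qed.

Section Interval.
Variables (I : finType) (p : {ffun I -> I}).
Hypothesis Fp : is_forest p.

Definition mkf (S : {set I}) : {ffun I -> I} :=
  [ffun v => if v \in S then p v else v].
Lemma mkfE S v : mkf S v = if v \in S then p v else v.
Proof. by rewrite ffunE. Qed.

Definition setf (x : {ffun I -> I}) : {set I} := [set v | x v != v].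

Lemma le_edges (x y : {ffun I -> I}) : nap_le x y -> forall v, x v != v -> y v = x v.
Proof.
elim=> // {}x {}y z [_ [a [b [_ hxa _ ->]]]] _ IH v hv.
have hva : v != a by apply: contraNneq hv => ->; rewrite hxa.
by rewrite IH ffunE (negbTE hva).
Qed.

Lemma stuck (z y : {ffun I -> I}) : nap_le z y -> forall v w, z v != v -> z w = w -> y w != v.
Proof.
elim=> [x _|x x' y' [_ [a [b [hab hxa hxb ex']]]] hle IH] v w hv hw.
  by rewrite hw; apply: contraNneq hv => <-; rewrite hw.
have hva : v != a by apply: contraNneq hv => ->; rewrite hxa.
case: (eqVneq w a) => hwa.
  have hx'a : x' a = b by rewrite ex' ffunE eqxx.
  have e : y' w = b.
    rewrite hwa (le_edges hle) // hx'a eq_sym //.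
  rewrite e; apply: contraNneq hv => <-; by rewrite hxb.
by apply: IH; rewrite ex' ffunE ?(negbTE hwa) ?(negbTE hva).
Qed.

Lemma mkf_forest S : goodb p S -> is_forest (mkf S).
Proof.
move=> _.
have Ap := ffun_forest Fp.
apply/forallP => v; apply/eqP.
set y := iter _ _ v.
have key : forall n, mkf S (iter n (mkf S) v) != iter n (mkf S) v ->
   iter n (mkf S) v = iter n p v.
  elim=> [|n IH] //= h.
  have h' : mkf S (iter n (mkf S) v) != iter n (mkf S) v.
    by apply: contraNneq h => e; rewrite e e.
  have := h'; rewrite mkfE; case: ifP => hin; last by rewrite eqxx.
  by move=> _; rewrite (IH h').
apply/eqP; apply/negPn/negP => hy.
have := key _ hy; rewrite -/y => ey.
move: hy; rewrite mkfE ey; case: ifP => _; last by rewrite eqxx.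
by move/forallP: Fp => /(_ v) /eqP ->; rewrite eqxx.
Qed.

Lemma interval_mem (x : {ffun I -> I}) : nap_le x p -> x = mkf (setf x) /\ goodb p (setf x).
Proof.
move=> hx; split.
  apply/ffunP => v; rewrite ffunE inE; case: ifP => // h.
    by rewrite (le_edges hx h).
  by move/negbFE/eqP: h.
apply/goodP; split => [v|z].
  by rewrite inE => h; rewrite (le_edges hx h).
rewrite !inE => h; apply/negP => /eqP hz.
have := stuck hx h hz; by rewrite eqxx.
Qed.

Lemma build k S U : goodb p S -> goodb p U -> S \subset U ->
  #|U :\: S| = k -> nap_le (mkf S) (mkf U).
Proof.
have Ap := ffun_forest Fp.
elim: k S => [|k IH] S gS gU sSU hk.
  have eSU : S = U.
    apply/eqP; rewrite eqEsubset sSU /=; apply/subsetP => v hv.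
    apply/negPn/negP => hvS.
    have hvUS : v \in U :\: S by rewrite inE hvS hv.
    have : 0 < #|U :\: S| by apply/card_gt0P; exists v.
    by rewrite hk.
  by rewrite eSU; apply: nap_le_refl; apply: mkf_forest; rewrite -eSU.
have [v0 hv0] : exists v, v \in U :\: S by apply/card_gt0P; rewrite hk.
case: (@arg_maxnP _ v0 (mem (U :\: S)) (dep Ap) hv0) => v hv vmax.
move: hv; rewrite !inE => /andP[hvS hvU].
case/goodP: (gS) => gS1 gS2; case/goodP: (gU) => gU1 gU2.
have hvr : p v != v by apply: gU1.
have hpv : p v \notin S by apply: contra hvS; apply: gS2.
have gS' : goodb p (v |: S).
  apply/goodP; split => [u|z].
    by rewrite !inE => /orP[/eqP ->|/gS1].
  rewrite !inE => /orP[/eqP hz|/gS2 ->]; last by rewrite orbT.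
  case: (eqVneq z v) => [->|hzv]; first by rewrite ?eqxx.
  have hzU : z \in U by apply: gU2; rewrite hz.
  have hzr : p z != z by rewrite hz eq_sym.
  have := dep_lt Ap hzr; rewrite hz => lt.
  apply/orP; right; apply/negPn/negP => hzS.
  have := vmax z; rewrite !inE hzS hzU => /(_ isT).
  by move=> h; move: lt; rewrite ltnNge => /negP; apply.
apply: (@nap_le_step _ _ (mkf (v |: S))).
  split; first exact: mkf_forest gS.
  exists v, (p v); split.
  - by rewrite eq_sym.
  - by rewrite mkfE (negbTE hvS).
  - by rewrite mkfE (negbTE hpv).
  apply/ffunP => w; rewrite ffunE !mkfE !inE.
  by case: (eqVneq w v) => [->|] //=.
apply: IH => //.
  by apply/subsetP => u; rewrite !inE => /orP[/eqP ->//|]; apply/subsetP.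
apply/eqP; rewrite -eqSS -hk.
have -> : U :\: S = v |: (U :\: (v |: S)).
  apply/setP => u; rewrite !inE; case: (eqVneq u v) => [->|] //=.
  by rewrite hvS hvU.
by rewrite cardsU1 !inE eqxx.
Qed.

End Interval.

End Part2.
Import Part2.

Module Part3.
Set Implicit Arguments. Unset Strict Implicit. Unset Printing Implicit Defensive.
Import GRing.Theory.

Lemma iso_refl P : poset_iso P P.
Proof. by exists id, id; split => // a b. Qed.

Lemma iso_sym P Q : poset_iso P Q -> poset_iso Q P.
Proof.
move=> [g [h [gK hK H]]]; exists h, g; split => // a b.
by rewrite H !hK.
Qed.

Lemma iso_trans P Q R : poset_iso P Q -> poset_iso Q R -> poset_iso P R.
Proof.
move=> [g [h [gK hK H]]] [g' [h' [gK' hK' H']]].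
exists (g' \o g), (h \o h'); split => /=.
- by move=> a /=; rewrite gK' gK.
- by move=> a /=; rewrite hK hK'.
by move=> a b; rewrite H H'.
Qed.

Lemma iso_prod P P' Q Q' : poset_iso P P' -> poset_iso Q Q' ->
  poset_iso (prod_poset P Q) (prod_poset P' Q').
Proof.
move=> [g [h [gK hK H]]] [g' [h' [gK' hK' H']]].
exists (fun a => (g a.1, g' a.2)), (fun a => (h a.1, h' a.2)); split => /=.
- by move=> [a b] /=; rewrite gK gK'.
- by move=> [a b] /=; rewrite hK hK'.
by move=> [a b] [c d] /=; rewrite H H'.
Qed.

Lemma sig_inj (A : Type) (P : A -> Prop) (x y : {a | P a}) :
  proj1_sig x = proj1_sig y -> x = y.
Proof.
case: x y => a pa [b pb] /= e; subst b; by rewrite (proof_irrelevance _ pa pb).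
Qed.

Lemma iso_interval (t : ltree) : is_forest (ltp t) ->
  poset_iso (interval_poset t) (Gposet (ltp t)).
Proof.
move=> F.
set p := ltp t.
have hp : forall S : Gtype p, nap_le (nap_bot (ltV t)) (mkf p (val S)) /\ nap_le (mkf p (val S)) p.
  move=> [S gS] /=.
  have eb : nap_bot (ltV t) = mkf p set0.
    by apply/ffunP => v; rewrite mkfE inE ffunE.
  have ep : p = mkf p [set v | p v != v].
    apply/ffunP => v; rewrite mkfE inE; case: ifP => // /negbFE /eqP //.
  have gT : goodb p [set v | p v != v].
    apply/goodP; split => [v|z]; rewrite !inE //.
    by apply: contra => /eqP e; rewrite !e.
  split.
    rewrite eb; apply: (build F (good0 _) gS (sub0set _) (erefl _)).
  rewrite {2}ep; apply: (build F gS gT _ (erefl _)).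
  by apply/subsetP => v /(goodP _ _ gS).1; rewrite inE.
exists (fun x : pcar (interval_poset t) => insubd (G0 p) (setf (proj1_sig x))).
exists (fun S : Gtype p => exist _ (mkf p (val S)) (hp S)).
split.
- move=> [x [h1 h2]]; apply: sig_inj => /=.
  have [ex gx] := interval_mem h2.
  by rewrite insubdK // -ex.
- move=> [S gS]; apply: val_inj => /=.
  rewrite insubdK; last first.
    have := (interval_mem (hp (Sub S gS)).2).2; by [].
  apply/setP => v; rewrite inE mkfE; case: ifP => h.
    by rewrite ((goodP _ _ gS).1 v h).
  by rewrite eqxx.
move=> [x [x1 x2]] [y [y1 y2]] /=.
have [ex gx] := interval_mem x2.
have [ey gy] := interval_mem y2.
rewrite !insubdK //; split.
  move=> hxy; apply/subsetP => v; rewrite !inE => hv.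
  by rewrite (le_edges hxy hv).
move=> sxy; rewrite ex ey; apply: (build F gx gy sxy (erefl _)).
Qed.

End Part3.
Import Part3.

Module Part4.
Set Implicit Arguments. Unset Strict Implicit. Unset Printing Implicit Defensive.
Import GRing.Theory.

Section Sum.
Variables (A B : finType) (qa : A -> A) (qb : B -> B).
Definition sumq (x : A + B) : A + B :=
  match x with inl a => inl (qa a) | inr b => inr (qb b) end.

Definition uset (S1 : {set A}) (S2 : {set B}) : {set A + B} :=
  inl @: S1 :|: inr @: S2.

Lemma memU_l S1 S2 a : (inl a \in uset S1 S2) = (a \in S1).
Proof.
rewrite /uset inE (mem_imset _ _ (@inl_inj A B)).
by case: (a \in S1) => //=; apply/imsetP => [[b _]].
Qed.

Lemma memU_r S1 S2 b : (inr b \in uset S1 S2) = (b \in S2).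
Proof.
rewrite /uset inE (mem_imset _ _ (@inr_inj A B)).
by case: (b \in S2); rewrite ?orbT //= orbF; apply/imsetP => [[a _]].
Qed.

Lemma good_uset S1 S2 : goodb qa S1 -> goodb qb S2 -> goodb sumq (uset S1 S2).
Proof.
move=> /goodP [h1 h2] /goodP [k1 k2]; apply/goodP; split.
  case=> [a|b]; rewrite ?memU_l ?memU_r /= => h; apply/eqP => -[e].
    by move: (h1 _ h); rewrite e eqxx.
  by move: (k1 _ h); rewrite e eqxx.
case=> [a|b] /=; rewrite ?memU_l ?memU_r; [exact: h2| exact: k2].
Qed.

Lemma good_l S : goodb sumq S -> goodb qa [set a | inl a \in S].
Proof.
move=> /goodP [h1 h2]; apply/goodP; split => [a|a]; rewrite !inE.
  by move/h1; apply: contraNneq => /= ->.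
by move=> h; apply: (h2 (inl a)).
Qed.

Lemma good_r S : goodb sumq S -> goodb qb [set b | inr b \in S].
Proof.
move=> /goodP [h1 h2]; apply/goodP; split => [a|a]; rewrite !inE.
  by move/h1; apply: contraNneq => /= ->.
by move=> h; apply: (h2 (inr a)).
Qed.

Lemma iso_sum : poset_iso (prod_poset (Gposet qa) (Gposet qb)) (Gposet sumq).
Proof.
exists (fun x : Gtype qa * Gtype qb => insubd (G0 sumq) (uset (val x.1) (val x.2))).
exists (fun S : Gtype sumq => (insubd (G0 qa) [set a | inl a \in val S],
                              insubd (G0 qb) [set b | inr b \in val S])).
split.
- move=> [[S1 g1] [S2 g2]] /=.
  have gu := good_uset g1 g2.
  have e : val (insubd (G0 sumq) (uset S1 S2)) = uset S1 S2 by rewrite insubdK.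
  have e1 : [set a | inl a \in uset S1 S2] = S1.
    by apply/setP => a; rewrite inE memU_l.
  have e2 : [set b | inr b \in uset S1 S2] = S2.
    by apply/setP => a; rewrite inE memU_r.
  by rewrite e e1 e2; congr pair; apply: val_inj; rewrite /= insubdK.
- move=> [S gS]; apply: val_inj => /=.
  have e1 : val (insubd (G0 qa) [set a | inl a \in S]) = [set a | inl a \in S].
    by rewrite insubdK //; apply: good_l.
  have e2 : val (insubd (G0 qb) [set a | inr a \in S]) = [set a | inr a \in S].
    by rewrite insubdK //; apply: good_r.
  have eS : uset [set a | inl a \in S] [set a | inr a \in S] = S.
    by apply/setP => [[a|b]]; rewrite ?memU_l ?memU_r inE.
  by rewrite e1 e2 eS insubdK.
move=> [[S1 g1] [S2 g2]] [[T1 k1] [T2 k2]] /=.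
rewrite !insubdK; try exact: good_uset. split.
  move=> [/subsetP s1 /subsetP s2]; apply/subsetP => [[a|b]];
   rewrite ?memU_l ?memU_r; [exact: s1 | exact: s2].
move=> /subsetP s; split; apply/subsetP => x hx.
  by have := s (inl x); rewrite !memU_l; apply.
by have := s (inr x); rewrite !memU_r; apply.
Qed.
End Sum.

Lemma iso_void (q : void -> void) : poset_iso unit_poset (Gposet q).
Proof.
exists (fun _ => G0 q), (fun _ => tt); split.
- by case.
- move=> [S gS]; apply: val_inj => /=; apply/setP => -[].
- by move=> a b; split => // _; apply/subsetP.
Qed.

Fixpoint VL (L : seq ltree) : finType :=
  match L with [::] => void | t :: L' => (ltV t + VL L')%type end.

Fixpoint qL (L : seq ltree) : VL L -> VL L :=
  match L return VL L -> VL L with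
  | [::] => id
  | t :: L' => sumq (ltp t) (@qL L')
  end.

Lemma iso_PL (L : seq ltree) : all (fun t => is_forest (ltp t)) L ->
  poset_iso (prod_intervals L) (Gposet (@qL L)).
Proof.
elim: L => [|t L IH] /=; first by move=> _; apply: iso_void.
move=> /andP[Ft FL].
apply: iso_trans (iso_sum _ _).
by apply: iso_prod; [exact: iso_interval|exact: IH].
Qed.

End Part4.
Import Part4.

Module Part5.
Set Implicit Arguments. Unset Strict Implicit. Unset Printing Implicit Defensive.
Import GRing.Theory.

Section Birk.
Variables (T : finType) (q : T -> T).
Hypothesis A : acyc q.

Definition Dset v : {set T} := [set x | desc (finfun q) v x].

Lemma inD v x : reflect (anc q v x) (x \in Dset v).
Proof. rewrite inE; exact: descP. Qed.

Lemma anc_nonroot v x : anc q v x -> q v != v -> q x != x.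
Proof.
move=> h hv; apply/eqP => hx; move: hv; by rewrite (anc_root hx h) hx eqxx.
Qed.

Lemma closure_anc (c : {set T}) u x : goodb q c -> anc q u x -> u \in c -> x \in c.
Proof.
move=> /goodP[_ g2] [n]; elim: n x => [|n IH] x /= hx hu; first by rewrite hx.
apply: g2; apply: IH => //; by rewrite -iterSr.
Qed.

Lemma good_D v : q v != v -> goodb q (Dset v).
Proof.
move=> hv; apply/goodP; split => [x /inD h|z /inD h].
  exact: anc_nonroot h hv.
by apply/inD; apply: anc_qx.
Qed.

Definition Dg v : Gtype q := insubd (G0 q) (Dset v).

Lemma valDg v : q v != v -> val (Dg v) = Dset v.
Proof. by move=> hv; rewrite insubdK //; apply: good_D. Qed.

Lemma D_self v : v \in Dset v.
Proof. by apply/inD; apply: anc_refl. Qed.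

Lemma D_sub u v : (Dset u \subset Dset v) <-> anc q v u.
Proof.
split; first by move/subsetP => /(_ u (D_self u)) /inD.
move=> h; apply/subsetP => x /inD hx; apply/inD; exact: anc_trans h hx.
Qed.

Lemma D_inj u v : Dset u = Dset v -> u = v.
Proof.
move=> e; apply: (anc_antisym A).
  by apply/(D_sub v u); rewrite e.
by apply/(D_sub u v); rewrite e.
Qed.

Definition JI (a : Gtype q) : bool :=
  [exists b : Gtype q, (val b \proper val a) &&
     [forall c : Gtype q, (val c \proper val a) ==> (val c \subset val b)]].

Lemma JI_D v : q v != v -> JI (Dg v).
Proof.
move=> hv.
have gb : goodb q (Dset v :\ v).
  apply/goodP; split => [x|z]; rewrite !inE.
    by move=> /andP[_ /(descP A) h]; apply: anc_nonroot h hv.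
  move=> /andP[hzv /(descP A) hz]; apply/andP; split; last first.
    by apply/(descP A); apply: anc_qx.
  apply: contra hzv => /eqP e; subst z; apply/eqP.
  apply: (anc_antisym A _ hz); exact: anc_q.
apply/existsP; exists (insubd (G0 q) (Dset v :\ v)).
rewrite valDg // insubdK //; apply/andP; split.
  by rewrite properE subD1set /=; apply/negP => /subsetP /(_ v (D_self v)); rewrite !inE eqxx.
apply/forallP => c; apply/implyP => hc.
have hvc : v \notin val c.
  apply/negP => hvc; move: hc; rewrite properE => /andP[_]; apply/negP; apply/negPn.
  apply/subsetP => x /inD hx; exact: closure_anc (valP c) hx hvc.
apply/subsetP => x hx; rewrite !inE.
have := subsetP (proper_sub hc) x hx; rewrite inE => ->; rewrite andbT.
by apply: contraNneq hvc => <-.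
Qed.

Lemma JI_inv a : JI a -> exists2 v, q v != v & val a = Dset v.
Proof.
move=> /existsP [b /andP [hba /forallP hb]].
case: (boolP [exists v in val a, Dset v == val a]).
  move=> /existsP [v /andP [hv /eqP e]]; exists v => //.
  by have := (goodP _ _ (valP a)).1 v hv.
move=> /existsPn hne; exfalso.
move: hba; rewrite properE => /andP[_]; apply/negP; apply/negPn.
apply/subsetP => v hv.
have hvr : q v != v by have := (goodP _ _ (valP a)).1 v hv.
have hDa : Dset v \subset val a.
  apply/subsetP => x /inD hx; exact: closure_anc (valP a) hx hv.
have := hb (Dg v); rewrite valDg // properEneq hDa andbT.
have -> : Dset v != val a by have := hne v; rewrite hv.
move=> /= /subsetP; apply; exact: D_self.
Qed.

End Birk.

Section JImap.
Variables (V W : finType) (qV : V -> V) (qW : W -> W).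
Variables (g : Gtype qV -> Gtype qW) (h : Gtype qW -> Gtype qV).
Hypotheses (gK : cancel g h) (hK : cancel h g).
Hypothesis ord : forall a b : Gtype qV, (val a \subset val b) <-> (val (g a) \subset val (g b)).

Lemma ord_proper (a b : Gtype qV) : (val a \proper val b) = (val (g a) \proper val (g b)).
Proof.
rewrite !properE.
by apply/idP/idP => /andP[h1 h2]; apply/andP; split;
  try (by apply/ord); apply: contra h2 => /ord.
Qed.

Lemma JI_map (a : Gtype qV) : JI a -> JI (g a).
Proof.
move=> /existsP [b /andP [hba /forallP hb]].
apply/existsP; exists (g b); rewrite -ord_proper hba /=.
apply/forallP => c; apply/implyP => hc.
rewrite -(hK c) -ord_proper in hc.
have := hb (h c); rewrite hc /= => /ord; by rewrite hK.
Qed.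
End JImap.

End Part5.
Import Part5.

Module Part6.
Set Implicit Arguments. Unset Strict Implicit. Unset Printing Implicit Defensive.
Import GRing.Theory.

Definition topb (T : finType) (q : T -> T) x := q (q x) == q x.

Section Top.
Variables (T : finType) (q : T -> T).
Hypothesis A : acyc q.

Lemma top_char x : q x != x ->
  (topb q x <-> forall u, q u != u -> anc q u x -> u = x).
Proof.
move=> hx; split.
  move=> /eqP ht u hu [[|n] hn] //.
  move: hn; rewrite iterSr iter_fix // => e; move: hu; by rewrite -e ht eqxx.
move=> H; apply/negPn/negP => hq.
have := H (q x) hq (anc_q q x) => e; by rewrite e eqxx in hx.
Qed.

Lemma anc_cover' x u : q (q x) != q x -> anc q u x -> u != x ->
  (forall z, q z != z -> anc q z x -> z != x -> anc q z u) -> u = q x.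
Proof.
move=> hqx hu hux H.
have hx : q x != x by apply: contraNneq hqx => e; rewrite !e.
apply: (anc_antisym A); first by apply: anc_strict => //; apply/eqP.
apply: H => //; exact: anc_q.
Qed.
End Top.

Section AncIso.
Variables (V W : finType) (qV : V -> V) (qW : W -> W).
Hypotheses (AV : acyc qV) (AW : acyc qW).
Variable phi : V -> W.
Hypothesis H1 : forall v, qV v != v -> qW (phi v) != phi v.
Hypothesis H2 : forall u v, qV u != u -> qV v != v ->
  (anc qV u v <-> anc qW (phi u) (phi v)).
Hypothesis H3 : forall w, qW w != w -> exists2 v, qV v != v & phi v = w.

Lemma phi_inj u v : qV u != u -> qV v != v -> phi u = phi v -> u = v.
Proof.
move=> hu hv e; apply: (anc_antisym AV).
  by apply/(H2 hu hv); rewrite e; apply: anc_refl.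
by apply/(H2 hv hu); rewrite e; apply: anc_refl.
Qed.

Lemma top_phi x : qV x != x -> topb qV x = topb qW (phi x).
Proof.
move=> hx; apply/idP/idP.
  move=> /(top_char hx) H; apply/(top_char (H1 hx)) => w hw hwa.
  case: (H3 hw) => u hu e; subst w; congr phi; apply: (H u hu); by apply/(H2 hu hx).
move=> /(top_char (H1 hx)) H; apply/(top_char hx) => u hu hua.
apply: (phi_inj hu hx); apply: (H _ (H1 hu)); by apply/(H2 hu hx).
Qed.

Lemma par_phi x : qV x != x -> ~~ topb qV x -> qW (phi x) = phi (qV x).
Proof.
move=> hx ht.
have hqx : qV (qV x) != qV x by [].
have hqx' : qV x != x by [].
have htW : ~~ topb qW (phi x) by rewrite -top_phi.
symmetry; apply: (anc_cover' AW htW).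
- by apply/(H2 hqx hx); apply: anc_q.
- by apply: contraNneq hqx' => /(phi_inj hqx hx) ->.
move=> z hz hza hzx.
have [u hu e] := H3 hz; subst z.
have hux : u != x by apply: contraNneq hzx => ->.
apply/(H2 hu hqx); apply: anc_strict => //; last by apply/eqP.
by apply/(H2 hu hx).
Qed.
End AncIso.

Section GIso.
Variables (V W : finType) (qV : V -> V) (qW : W -> W).
Hypotheses (AV : acyc qV) (AW : acyc qW).
Variables (g : Gtype qV -> Gtype qW) (h : Gtype qW -> Gtype qV).
Hypotheses (gK : cancel g h) (hK : cancel h g).
Hypothesis ord : forall a b : Gtype qV, (val a \subset val b) <-> (val (g a) \subset val (g b)).
Variable w0 : W.

Definition phiG v := odflt w0 [pick u | (qW u != u) && (Dset qW u == val (g (Dg qV v)))].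

Lemma phiGP v : qV v != v -> qW (phiG v) != phiG v /\ Dset qW (phiG v) = val (g (Dg qV v)).
Proof.
move=> hv.
have := JI_map hK ord (JI_D AV hv) => /(JI_inv AW) [u hu e].
rewrite /phiG; case: pickP => [u' /andP [hu' /eqP e'] | /(_ u)] /=.
  by [].
by rewrite hu e eqxx.
Qed.

Lemma phiG_H1 v : qV v != v -> qW (phiG v) != phiG v.
Proof. by move/phiGP => []. Qed.

Lemma phiG_H2 u v : qV u != u -> qV v != v ->
  (anc qV u v <-> anc qW (phiG u) (phiG v)).
Proof.
move=> hu hv.
rewrite -(D_sub AV) -(D_sub AW) (phiGP hu).2 (phiGP hv).2 -(valDg AV hu) -(valDg AV hv).
exact: ord.
Qed.

Lemma phiG_H3 w : qW w != w -> exists2 v, qV v != v & phiG v = w.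
Proof.
move=> hw.
have ordh : forall a b : Gtype qW, (val a \subset val b) <-> (val (h a) \subset val (h b)).
  by move=> a b; rewrite ord !hK.
have := JI_map gK ordh (JI_D AW hw) => /(JI_inv AV) [v hv e].
exists v => //.
have e2 : Dg qV v = h (Dg qW w) by apply: val_inj; rewrite e (valDg AV hv).
by apply: (D_inj AW); rewrite (phiGP hv).2 e2 hK (valDg AW hw).
Qed.
End GIso.

End Part6.
Import Part6.

Module Part7.
Set Implicit Arguments. Unset Strict Implicit. Unset Printing Implicit Defensive.
Import GRing.Theory.

Lemma descP' (I : finType) (p : {ffun I -> I}) (A : acyc p) c x :
  reflect (anc p c x) (desc p c x).
Proof. by have := descP A c x; rewrite ffunK. Qed.

Section BranchBasics.
Variable T : ltree.
Hypothesis A : acyc (ltp T).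
Variable c : ltV T.
Hypothesis hc : ltp T c != c.
Hypothesis tc : topb (ltp T) c.
Let r := ltp T c.

Lemma inB x : reflect (x = r \/ anc (ltp T) c x) (x \in branch_set (ltp T) r c).
Proof.
rewrite unfold_in /branch_set; apply: (iffP orP) => [[/eqP|/(descP' A)]|[->|/(descP' A)]];
  by [left|right|rewrite eqxx|move=> ->; rewrite orbT].
Qed.

Lemma anc_c_neq y : anc (ltp T) c y -> y != r.
Proof.
move=> h; apply/eqP => e; subst y.
have e := anc_root (eqP tc) h; move: hc; by rewrite -e eqxx.
Qed.

Lemma bset_par y : y \in branch_set (ltp T) r c -> ltp T y \in branch_set (ltp T) r c.
Proof.
move/inB => [->|h]; apply/inB.
  by left; apply/eqP.
case: (eqVneq y c) => [->|hyc]; first by left.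
by right; apply: anc_strict h _; apply/eqP; rewrite eq_sym.
Qed.

Lemma val_bpar (x : ltV (branch T r c)) : val (ltp (branch T r c) x) = ltp T (val x).
Proof. by rewrite /= ffunE insubdK //; apply: bset_par; apply: valP. Qed.
End BranchBasics.

Section BT.
Variables T1 T2 : ltree.
Hypotheses (A1 : acyc (ltp T1)) (A2 : acyc (ltp T2)).
Variable c : ltV T1.
Variables (phi : ltV T1 -> ltV T2) (psi : ltV T2 -> ltV T1).
Hypotheses (hc1 : ltp T1 c != c) (tc1 : topb (ltp T1) c).
Hypotheses (hc2 : ltp T2 (phi c) != phi c) (tc2 : topb (ltp T2) (phi c)).
Hypothesis Ha : forall x, anc (ltp T1) c x -> anc (ltp T2) (phi c) (phi x) /\ psi (phi x) = x.
Hypothesis Hb : forall y, anc (ltp T2) (phi c) y -> anc (ltp T1) c (psi y) /\ phi (psi y) = y.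
Hypothesis Hc : forall x, anc (ltp T1) c x -> x != c -> ltp T2 (phi x) = phi (ltp T1 x).

Let r1 := ltp T1 c.
Let r2 := ltp T2 (phi c).
Let B1 := branch T1 r1 c.
Let B2 := branch T2 r2 (phi c).
Let root1 : ltV B1 := branch_root (ltp T1) r1 c.
Let root2 : ltV B2 := branch_root (ltp T2) r2 (phi c).

Definition bg (x : ltV B1) : ltV B2 :=
  if val x == r1 then root2 else insubd root2 (phi (val x)).
Definition bh (y : ltV B2) : ltV B1 :=
  if val y == r2 then root1 else insubd root1 (psi (val y)).

Lemma valbg x : anc (ltp T1) c (val x) -> val (bg x) = phi (val x).
Proof.
move=> h; rewrite /bg (negbTE (anc_c_neq hc1 tc1 h)) insubdK //.
by apply/(inB A2 (phi c)); right; apply: (Ha h).1.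
Qed.

Lemma valbh y : anc (ltp T2) (phi c) (val y) -> val (bh y) = psi (val y).
Proof.
move=> h; rewrite /bh (negbTE (anc_c_neq hc2 tc2 h)) insubdK //.
by apply/(inB A1 c); right; apply: (Hb h).1.
Qed.

Lemma bg_root x : val x = r1 -> bg x = root2.
Proof. by move=> e; rewrite /bg e eqxx. Qed.
Lemma bh_root y : val y = r2 -> bh y = root1.
Proof. by move=> e; rewrite /bh e eqxx. Qed.

Lemma branch_transport : tree_iso B1 B2.
Proof.
exists bg, bh; split.
- move=> x; case/(inB A1 c): (valP x) => [e|h].
    by rewrite bg_root // bh_root //; apply: val_inj.
  have e1 := valbg h.
  have a2 : anc (ltp T2) (phi c) (val (bg x)) by rewrite e1; exact: (Ha h).1.
  by apply: val_inj; rewrite (valbh a2) e1 (Ha h).2.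
- move=> y; case/(inB A2 (phi c)): (valP y) => [e|h].
    by rewrite bh_root // bg_root //; apply: val_inj.
  have e1 := valbh h.
  have a2 : anc (ltp T1) c (val (bh y)) by rewrite e1; exact: (Hb h).1.
  by apply: val_inj; rewrite (valbg a2) e1 (Hb h).2.
move=> x; apply: val_inj; rewrite (val_bpar A2 tc2).
case/(inB A1 c): (valP x) => [e|h].
  have ep : val (ltp B1 x) = r1 by rewrite (val_bpar A1 tc1) e; apply/eqP.
  rewrite (bg_root ep) (bg_root e) /=; exact: (esym (eqP tc2)).
case: (eqVneq (val x) c) => [e|hxc].
  have ep : val (ltp B1 x) = r1 by rewrite (val_bpar A1 tc1) e.
  by rewrite (bg_root ep) (valbg h) e.
have h' : anc (ltp T1) c (ltp T1 (val x)).
  by apply: anc_strict h _; apply/eqP; rewrite eq_sym.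
have ep : val (ltp B1 x) = ltp T1 (val x) by rewrite (val_bpar A1 tc1).
rewrite (valbg (x := ltp B1 x)); last by rewrite ep.
by rewrite ep (valbg h) Hc.
Qed.
End BT.

End Part7.
Import Part7.

Module Part8.
Set Implicit Arguments. Unset Strict Implicit. Unset Printing Implicit Defensive.
Import GRing.Theory.

Lemma tree_iso_sym t1 t2 : tree_iso t1 t2 -> tree_iso t2 t1.
Proof.
move=> [g [h [gK hK H]]]; exists h, g; split => // y.
by rewrite -{1}(hK y) -H gK.
Qed.

Lemma tree_iso_trans t1 t2 t3 : tree_iso t1 t2 -> tree_iso t2 t3 -> tree_iso t1 t3.
Proof.
move=> [g [h [gK hK H]]] [g' [h' [gK' hK' H']]].
exists (g' \o g), (h \o h'); split => /=.
- by move=> x /=; rewrite gK' gK.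
- by move=> x /=; rewrite hK hK'.
by move=> x /=; rewrite H H'.
Qed.

Section NAut.
Variables t1 t2 : ltree.
Variables (g : ltV t1 -> ltV t2) (h : ltV t2 -> ltV t1).
Hypotheses (gK : cancel g h) (hK : cancel h g).
Hypothesis H : forall x, g (ltp t1 x) = ltp t2 (g x).

Lemma cmap_inj (s : {perm ltV t1}) : injective (g \o (s \o h)).
Proof.
apply: inj_comp; first exact: can_inj gK.
apply: inj_comp; [exact: perm_inj | exact: can_inj hK].
Qed.

Definition cmap (s : {perm ltV t1}) : {perm ltV t2} := perm (@cmap_inj s).

Lemma nAut_le : nAut (ltp t1) <= nAut (ltp t2).
Proof.
rewrite /nAut.
have cinj : injective cmap.
  move=> s1 s2 e; apply/permP => x.
  have := congr1 (fun s : {perm _} => s (g x)) e; rewrite !permE /= gK.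
  exact: (can_inj gK).
rewrite -(card_imset _ cinj); apply: subset_leq_card.
apply/subsetP => _ /imsetP [s hs ->]; rewrite inE.
move: hs; rewrite inE => /forallP hs.
apply/forallP => y; rewrite !permE /=.
have e : h (ltp t2 y) = ltp t1 (h y) by rewrite -{1}(hK y) -H gK.
by rewrite e (eqP (hs _)) H.
Qed.
End NAut.

Lemma nAut_iso t1 t2 : tree_iso t1 t2 -> nAut (ltp t1) = nAut (ltp t2).
Proof.
move=> I; apply/eqP; rewrite eqn_leq.
case: I => [g [h [gK hK H]]]; rewrite (nAut_le gK hK H) /=.
case: (tree_iso_sym (ex_intro _ g (ex_intro _ h (And3 gK hK H)))) => g' [h' [gK' hK' H']].
exact: nAut_le gK' hK' H'.
Qed.

Lemma tree_root t : tree t -> exists r, ltp t r = r /\ forall x, ltp t x = x -> x = r.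
Proof.
move=> /andP [_ /card1P [r hr]]; exists r; split.
  by have := hr r; rewrite !inE eqxx => /eqP.
by move=> x hx; have := hr x; rewrite !inE hx eqxx => /esym/eqP.
Qed.

Lemma acyc_ff (T : finType) (f : T -> T) : acyc f -> acyc (finfun f).
Proof.
move=> A n x; rewrite (eq_iter (ffunE f)) ffunE; exact: A.
Qed.

Lemma anc_ff (T : finType) (f : T -> T) u x : anc (finfun f) u x <-> anc f u x.
Proof. by split => -[n hn]; exists n; move: hn; rewrite (eq_iter (ffunE f)). Qed.

Lemma iter_val (t : ltree) c (x : ltV (branch t (ltp t c) c)) n :
  acyc (ltp t) -> topb (ltp t) c ->
  val (iter n (ltp (branch t (ltp t c) c)) x) = iter n (ltp t) (val x).
Proof.
move=> A tc; elim: n => // n IH; by rewrite !iterS (val_bpar A tc) IH.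
Qed.

Lemma branch_tree t c : tree t -> ltp t c != c -> topb (ltp t) c ->
  tree (branch t (ltp t c) c).
Proof.
move=> Tt hc tc.
have A : acyc (ltp t) by apply: ffun_forest; case/andP: Tt.
have [r [hr hu]] := tree_root Tt.
have er : ltp t c = r by apply: hu; apply/eqP.
apply/andP; split.
  apply: forest_ffun => n x hx.
  have := congr1 val hx; rewrite (iter_val _ _ A tc) => /A [->|e]; first by left.
  by right; apply: val_inj; rewrite (val_bpar A tc).
apply/eqP; apply: (eq_card1 (x := branch_root (ltp t) (ltp t c) c)) => x.
rewrite !inE; apply/eqP/eqP => [e|->].
  apply: val_inj => /=; apply: (etrans _ (esym er)); apply: hu.
  by have := congr1 val e; rewrite (val_bpar A tc).
apply: val_inj; rewrite (val_bpar A tc) /=; exact: (eqP tc).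
Qed.

Section SumIter.
Variables (A B : finType) (qa : A -> A) (qb : B -> B).
Lemma iter_sum_l n a : iter n (sumq qa qb) (inl a) = inl (iter n qa a).
Proof. by elim: n => //= n ->. Qed.
Lemma iter_sum_r n b : iter n (sumq qa qb) (inr b) = inr (iter n qb b).
Proof. by elim: n => //= n ->. Qed.

Lemma acyc_sum : acyc qa -> acyc qb -> acyc (sumq qa qb).
Proof.
move=> Aa Ab n [a|b].
  rewrite iter_sum_l => -[] /Aa [->|e]; [by left|by right; rewrite /= e].
rewrite iter_sum_r => -[] /Ab [->|e]; [by left|by right; rewrite /= e].
Qed.

Lemma anc_sum_l u a : anc (sumq qa qb) (inl u) (inl a) <-> anc qa u a.
Proof.
split => -[n hn]; exists n; move: hn; rewrite iter_sum_l; first by case.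
by move=> ->.
Qed.
Lemma anc_sum_r u a : anc (sumq qa qb) (inr u) (inr a) <-> anc qb u a.
Proof.
split => -[n hn]; exists n; move: hn; rewrite iter_sum_r; first by case.
by move=> ->.
Qed.
Lemma anc_sum_lr u b : ~ anc (sumq qa qb) (inl u) (inr b).
Proof. by move=> [n]; rewrite iter_sum_r. Qed.
Lemma anc_sum_rl u a : ~ anc (sumq qa qb) (inr u) (inl a).
Proof. by move=> [n]; rewrite iter_sum_l. Qed.
End SumIter.

End Part8.
Import Part8.

Module Part9.
Set Implicit Arguments. Unset Strict Implicit. Unset Printing Implicit Defensive.
Import GRing.Theory.

Lemma topb_ff (T : finType) (f : T -> T) x : topb (finfun f) x = topb f x.
Proof. by rewrite /topb !ffunE. Qed.

Lemma nr_ff (T : finType) (f : T -> T) x : (finfun f x != x) = (f x != x).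
Proof. by rewrite ffunE. Qed.

Section BTanc.
Variables (V W : finType) (qV : V -> V) (qW : W -> W).
Hypotheses (AV : acyc qV) (AW : acyc qW).
Variable phi : V -> W.
Hypothesis H1 : forall v, qV v != v -> qW (phi v) != phi v.
Hypothesis H2 : forall u v, qV u != u -> qV v != v ->
  (anc qV u v <-> anc qW (phi u) (phi v)).
Hypothesis H3 : forall w, qW w != w -> exists2 v, qV v != v & phi v = w.

Lemma BT_anc c : qV c != c -> topb qV c ->
  tree_iso (branch (@LTree V (finfun qV)) (finfun qV c) c)
           (branch (@LTree W (finfun qW)) (finfun qW (phi c)) (phi c)).
Proof.
move=> hc tc.
pose psi w := odflt c [pick v | (qV v != v) && (phi v == w)].
have psiP : forall v, qV v != v -> psi (phi v) = v.
  move=> v hv; rewrite /psi; case: pickP => [v' /andP [hv' /eqP e]|/(_ v)] /=.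
    exact: (phi_inj AV H2 hv' hv e).
  by rewrite hv eqxx.
have psiP2 : forall w, qW w != w -> qV (psi w) != psi w /\ phi (psi w) = w.
  move=> w hw; have [v hv e] := H3 hw; subst w; by rewrite psiP.
apply: (@branch_transport (@LTree V (finfun qV)) (@LTree W (finfun qW)) (acyc_ff AV) (acyc_ff AW) c phi psi).
- by rewrite nr_ff.
- by rewrite topb_ff.
- by rewrite nr_ff; apply: H1.
- by rewrite topb_ff -(top_phi AV H1 H2 H3 hc).
- move=> x /anc_ff hx; have hxr := anc_nonroot hx hc.
  split; last exact: psiP.
  by apply/anc_ff; apply/(H2 hc hxr).
- move=> y /anc_ff hy; have hyr := anc_nonroot hy (H1 hc).
  have [h1 h2] := psiP2 _ hyr; split => //.
  by apply/anc_ff; apply/(H2 hc h1); rewrite h2.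
move=> x /anc_ff hx hxc; have hxr := anc_nonroot hx hc.
rewrite !ffunE; apply: (par_phi AV AW H1 H2 H3 hxr).
apply/negP => /(top_char hxr) H; move: hxc; by rewrite (H c hc hx) eqxx.
Qed.
End BTanc.

Section BTsum.
Variables (T1 : ltree) (B : finType) (qb : B -> B).
Hypotheses (A1 : acyc (ltp T1)) (AB : acyc qb).

Lemma BT_inl c : ltp T1 c != c -> topb (ltp T1) c ->
  tree_iso (branch T1 (ltp T1 c) c)
    (branch (@LTree (ltV T1 + B)%type (finfun (sumq (ltp T1) qb)))
            (finfun (sumq (ltp T1) qb) (inl c)) (inl c)).
Proof.
move=> hc tc.
pose psi (y : ltV T1 + B) := match y with inl a => a | inr _ => c end.
apply: (@branch_transport T1 (@LTree (ltV T1 + B)%type (finfun (sumq (ltp T1) qb))) A1 (acyc_ff (acyc_sum A1 AB)) c inl psi) => //.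
- by rewrite /= nr_ff /=.
- by rewrite /= topb_ff /topb /=; rewrite (eqP tc).
- move=> x hx; split => //; apply/anc_ff; exact/anc_sum_l.
- move=> [a|b] /anc_ff h; last by case: (anc_sum_lr h).
  by split => //; apply/(anc_sum_l _ qb).
by move=> x _ _; rewrite ffunE.
Qed.
End BTsum.

Section BTsumr.
Variables (A : finType) (qa : A -> A) (B : finType) (qb : B -> B).
Hypotheses (AA : acyc qa) (AB : acyc qb).

Lemma BT_inr c : qb c != c -> topb qb c ->
  tree_iso (branch (@LTree B (finfun qb)) (finfun qb c) c)
    (branch (@LTree (A + B)%type (finfun (sumq qa qb)))
            (finfun (sumq qa qb) (inr c)) (inr c)).
Proof.
move=> hc tc.
pose psi (y : A + B) := match y with inr a => a | inl _ => c end.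
apply: (@branch_transport (@LTree B (finfun qb)) (@LTree (A + B)%type (finfun (sumq qa qb))) (acyc_ff AB) (acyc_ff (acyc_sum AA AB)) c inr psi) => //.
- by rewrite nr_ff.
- by rewrite topb_ff.
- by rewrite /= nr_ff /=.
- by rewrite /= topb_ff /topb /=; rewrite (eqP tc).
- move=> x /anc_ff hx; split => //; apply/anc_ff; exact/anc_sum_r.
- move=> [a|b] /anc_ff h; first by case: (anc_sum_rl h).
  by split => //; apply/anc_ff; apply/(anc_sum_r qa).
by move=> x _ _; rewrite !ffunE.
Qed.
End BTsumr.

End Part9.
Import Part9.

Module Part10.
Set Implicit Arguments. Unset Strict Implicit. Unset Printing Implicit Defensive.
Import GRing.Theory.
Local Open Scope ring_scope.

Definition LV (L : seq ltree) : ltree := @LTree (VL L) (finfun (@qL L)).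

Lemma tree_acyc t : tree t -> acyc (ltp t).
Proof. by move=> /andP[F _]; apply: ffun_forest. Qed.

Lemma acyc_qL L : all tree L -> acyc (@qL L).
Proof.
elim: L => [|t L IH] /=; first by move=> _ n [].
by move=> /andP[Tt TL]; apply: acyc_sum; [exact: tree_acyc | exact: IH].
Qed.

Lemma eq_inl (A B : eqType) (a b : A) : (inl a == inl b :> (A + B)%type) = (a == b).
Proof. by apply/eqP/eqP => [[]|->]. Qed.
Lemma eq_inr (A B : eqType) (a b : B) : (inr a == inr b :> (A + B)%type) = (a == b).
Proof. by apply/eqP/eqP => [[]|->]. Qed.

Section Values.
Variable f : ltree -> rat.
Definition vv (t : ltree) : rat := (nAut (ltp t))%:R * f t.

Fixpoint FL (L : seq ltree) : VL L -> rat :=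
  match L return VL L -> rat with
  | [::] => fun v => match v with end
  | t :: L' => fun v => match v with
                        | inl x => vv (branch t (ltp t x) x)
                        | inr y => @FL L' y end
  end.

Lemma FL_iso L : all tree L -> forall c : VL L, qL c != c -> topb (@qL L) c ->
  exists T, [/\ tree T, FL c = vv T & tree_iso T (branch (LV L) (ltp (LV L) c) c)].
Proof.
elim: L => [|t L IH] /=; first by move=> _ [].
move=> /andP[Tt TL] [x|y] /=.
  rewrite eq_inl => hx; rewrite /topb /= eq_inl => tx.
  exists (branch t (ltp t x) x); split => //.
    exact: branch_tree.
  exact: (BT_inl (tree_acyc Tt) (acyc_qL TL) hx tx).
rewrite eq_inr => hy; rewrite /topb /= eq_inr => ty.
have [T [TT e I]] := IH TL y hy ty.
exists T; split => //.
apply: tree_iso_trans I _.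
exact: (BT_inr (tree_acyc Tt) (acyc_qL TL) hy ty).
Qed.

Hypothesis hf : in_GNAP f.

Lemma vv_iso T1 T2 : tree T1 -> tree T2 -> tree_iso T1 T2 -> vv T1 = vv T2.
Proof.
move=> h1 h2 I; rewrite /vv (nAut_iso I); congr (_ * _).
exact: hf.1.
Qed.

Hypothesis Hcond : forall (t : ltree) (r : ltV t), tree t -> ltp t r = r ->
      (nAut (ltp t))%:R * f t =
      \prod_(c : ltV t | (c != r) && (ltp t c == r))
         ((nAut (ltp (branch t r c)))%:R * f (branch t r c)).

Lemma chi_VL L : all tree L ->
  \prod_(t <- L) vv t = \prod_(c : VL L | (qL c != c) && topb (@qL L) c) FL c.
Proof.
elim: L => [|t L IH] /=; first by move=> _; rewrite big_nil big_pred0 // => -[].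
move=> /andP[Tt TL]; rewrite big_cons big_sumType /= (IH TL); congr (_ * _).
have [r [hr hu]] := tree_root Tt.
rewrite {1}/vv (@Hcond t r Tt hr).
apply: eq_big => x.
  rewrite eq_inl /topb /= eq_inl.
  apply/andP/andP => -[h1 h2].
    by rewrite (eqP h2) hr eqxx; split => //; rewrite eq_sym.
  have e : ltp t x = r by apply: hu; apply/eqP.
  by split; [rewrite -e eq_sym | rewrite e].
move=> /andP[h1 h2].
by rewrite (eqP h2).
Qed.

Lemma prod_iso L1 L2 : all tree L1 -> all tree L2 ->
  poset_iso (Gposet (@qL L1)) (Gposet (@qL L2)) ->
  \prod_(c : VL L1 | (qL c != c) && topb (@qL L1) c) FL c =
  \prod_(c : VL L2 | (qL c != c) && topb (@qL L2) c) FL c.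
Proof.
move=> T1 T2 [g [h [gK hK ord]]].
have A1 := acyc_qL T1; have A2 := acyc_qL T2.
case: (pickP (fun _ : VL L2 => true)) => [w0 _|none]; last first.
  rewrite [RHS]big_pred0; last by move=> d; have := none d.
  apply: big_pred0 => c; apply/negP => /andP[hc _].
  have := JI_map hK ord (JI_D A1 hc) => /(JI_inv A2) [u _ _].
  by have := none u.
pose phi := phiG g w0.
have H1 := phiG_H1 A1 A2 hK ord w0.
have H2 := phiG_H2 A1 A2 hK ord w0.
have H3 := phiG_H3 A1 A2 gK hK ord w0.
rewrite (reindex_omap phi (fun d => [pick v | (qL v != v) && (phi v == d)])); last first.
  move=> d /andP[hd _]; case: pickP => [v /andP[_ /eqP e]|]; first by rewrite /= e.
  have [v hv e] := H3 d hd; move=> /(_ v); by rewrite hv /phi e eqxx.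
have Pe : forall c, ((qL (phi c) != phi c) && topb (@qL L2) (phi c) &&
    ([pick v | (qL v != v) && (phi v == phi c)] == Some c)) =
    ((qL c != c) && topb (@qL L1) c).
  move=> c.
  apply/idP/idP => [/andP[/andP[hc2 tc2] /eqP hp]|/andP[hc tc]].
    move: hp; case: pickP => [v /andP[hv /eqP e] [<-]|//].
    by rewrite hv /=; rewrite (top_phi A1 H1 H2 H3 hv) -/phi e.
  have hc2 := H1 c hc.
  rewrite hc2 -(top_phi A1 H1 H2 H3 hc) tc /=.
  case: pickP => [v /andP[hv /eqP e]|/(_ c)]; last by rewrite hc eqxx.
  by rewrite (phi_inj A1 H2 hv hc e).
symmetry; apply: eq_big => c; first exact: Pe.
rewrite Pe.
move=> /andP[hc tc].
have [S1 [TS1 e1 I1]] := FL_iso T1 hc tc.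
have hc2 := H1 c hc.
have tc2 : topb (@qL L2) (phi c) by rewrite -(top_phi A1 H1 H2 H3 hc).
have [S2 [TS2 e2 I2]] := FL_iso T2 hc2 tc2.
rewrite e1 e2; apply: vv_iso => //.
apply: tree_iso_sym; apply: tree_iso_trans I1 _; apply: tree_iso_trans _ (tree_iso_sym I2).
exact: (BT_anc A1 A2 H1 H2 H3 hc tc).
Qed.
End Values.

End Part10.
Import Part10.

Module Part11.
Set Implicit Arguments. Unset Strict Implicit. Unset Printing Implicit Defensive.
Import GRing.Theory.

Section GD.
Variables (V W : finType) (qV : V -> V) (qW : W -> W).
Variable beta : W -> V.
Hypothesis D1 : forall w, qW w != w -> qV (beta w) != beta w.
Hypothesis D2 : forall w1 w2, qW w1 != w1 -> qW w2 != w2 -> beta w1 = beta w2 -> w1 = w2.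
Hypothesis D3 : forall v, qV v != v -> exists2 w, qW w != w & beta w = v.
Hypothesis D4 : forall w, qW w != w -> qW (qW w) != qW w -> beta (qW w) = qV (beta w).
Hypothesis D5 : forall w, qW w != w -> qW (qW w) = qW w -> qV (qV (beta w)) = qV (beta w).

Lemma good_img S : goodb qW S -> goodb qV (beta @: S).
Proof.
move=> /goodP [g1 g2]; apply/goodP; split.
  by move=> _ /imsetP [w hw ->]; apply: D1; apply: g1.
move=> z /imsetP [w hw e].
case: (eqVneq (qV z) z) => [ez|hz]; first by rewrite -ez e; apply: imset_f.
have [w' hw' ez] := D3 hz.
have hwr := g1 _ hw.
case: (eqVneq (qW (qW w')) (qW w')) => [er|hr].
  have := D5 hw' er; rewrite ez e => e2; move: (D1 hwr); by rewrite e2 eqxx.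
have e3 : qW w' = w by apply: D2 => //; rewrite D4 // ez.
by rewrite -ez; apply: imset_f; apply: g2; rewrite e3.
Qed.

Definition preim (T : {set V}) : {set W} := [set w | (qW w != w) && (beta w \in T)].

Lemma good_preim T : goodb qV T -> goodb qW (preim T).
Proof.
move=> /goodP [g1 g2]; apply/goodP; split.
  by move=> w; rewrite inE => /andP[].
move=> z; rewrite !inE => /andP [hqz hb].
case: (eqVneq (qW z) z) => [ez|hz]; first by move: hqz; rewrite !ez eqxx.
rewrite /=; apply: g2; rewrite -D4 //.
Qed.

Lemma iso_GD : poset_iso (Gposet qW) (Gposet qV).
Proof.
exists (fun S : Gtype qW => insubd (G0 qV) (beta @: val S)).
exists (fun T : Gtype qV => insubd (G0 qW) (preim (val T))).
split.
- move=> [S gS]; apply: val_inj => /=.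
  have e1 : val (insubd (G0 qV) (beta @: S)) = beta @: S by rewrite insubdK //; exact: good_img.
  rewrite e1 insubdK; last exact: good_preim (good_img gS).
  apply/setP => w; rewrite !inE; apply/andP/idP => [[hw /imsetP [w' hw' e]]|hw].
    have hw'r := (goodP _ _ gS).1 _ hw'.
    by rewrite (D2 hw hw'r e).
  by split; [exact: (goodP _ _ gS).1 | apply: imset_f].
- move=> [T gT]; apply: val_inj => /=.
  have e1 : val (insubd (G0 qW) (preim T)) = preim T by rewrite insubdK //; exact: good_preim.
  rewrite e1 insubdK; last exact: good_img (good_preim gT).
  apply/setP => v; apply/imsetP/idP => [[w] |hv].
    by rewrite inE => /andP[_ h] ->.
  have [w hw e] := D3 ((goodP _ _ gT).1 _ hv).
  by exists w => //; rewrite inE hw e hv.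
move=> [S gS] [S' gS'] /=.
rewrite !insubdK; try exact: good_img. split => [h|h].
  exact: imsetS.
apply/subsetP => w hw.
have : beta w \in beta @: S' by apply: (subsetP h); apply: imset_f.
move=> /imsetP [w' hw' e].
by rewrite (D2 ((goodP _ _ gS).1 _ hw) ((goodP _ _ gS').1 _ hw') e).
Qed.
End GD.

End Part11.
Import Part11.

Module Part12.
Set Implicit Arguments. Unset Strict Implicit. Unset Printing Implicit Defensive.
Import GRing.Theory.

Lemma val_bpar_r (t : ltree) (r c : ltV t) : acyc (ltp t) -> ltp t c = r -> ltp t r = r ->
  forall x : ltV (branch t r c), val (ltp (branch t r c) x) = ltp t (val x).
Proof.
move=> A er hr; rewrite -er => x; apply: (val_bpar A).
by rewrite /topb er hr.
Qed.

Lemma inBr (t : ltree) (r c : ltV t) : acyc (ltp t) ->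
  forall x : ltV (branch t r c), val x = r \/ anc (ltp t) c (val x).
Proof.
move=> A x; have := valP x; rewrite /branch_set => /orP[/eqP|/(descP' A)];
  by [left|right].
Qed.

Section Branches.
Variable t : ltree.
Hypothesis Tt : tree t.
Variable r : ltV t.
Hypothesis hr : ltp t r = r.

Let A : acyc (ltp t) := tree_acyc Tt.

Lemma hu x : ltp t x = x -> x = r.
Proof.
have [r' [hr' hu']] := tree_root Tt.
by move=> hx; rewrite (hu' x hx) (hu' r hr).
Qed.

Definition child (c : ltV t) := (c != r) && (ltp t c == r).

Definition Lb (s : seq (ltV t)) := map (fun c => branch t r c) s.

Fixpoint bval (s : seq (ltV t)) : VL (Lb s) -> ltV t :=
  match s return VL (Lb s) -> ltV t with
  | [::] => fun v => match v with end
  | c :: s' => fun v => match v with inl x => val x | inr y => @bval s' y end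
  end.

Lemma child_anc c1 c2 v : child c1 -> child c2 -> anc (ltp t) c1 v -> anc (ltp t) c2 v -> c1 = c2.
Proof.
move=> /andP[h1 /eqP p1] /andP[h2 /eqP p2] [m hm] [n hn].
wlog le : c1 c2 m n h1 p1 h2 p2 hm hn / m <= n.
  move=> W; case: (leqP m n) => h; first exact: W h.
  by apply/esym; apply: (W c2 c1 n m) => //; apply: ltnW.
move: hn; rewrite -(subnK le) iterD hm.
case: (n - m) => [//|k]; rewrite iterSr p1 iter_fix // => e.
by move: h2; rewrite -e eqxx.
Qed.

Lemma top_anc v : v != r -> exists c, child c /\ anc (ltp t) c v.
Proof.
have : iter #|ltV t| (ltp t) v = r by apply: hu; apply: acyc_forestP.
move: #|ltV t| => n; elim: n v => [|n IH] v; first by move=> /= -> ; rewrite eqxx.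
rewrite iterSr => hn hv; case: (eqVneq (ltp t v) r) => [e|ne].
  by exists v; split; [rewrite /child hv e eqxx | apply: anc_refl].
have [c [hc ha]] := IH _ hn ne.
by exists c; split => //; apply: anc_qx.
Qed.

Lemma L1 s : all child s -> forall y : VL (Lb s), (qL y == y) = (bval y == r).
Proof.
elim: s => [|c s IH] /=; first by move=> _ [].
move=> /andP[/andP[hc /eqP pc] hs] [x|y] /=; last by rewrite eq_inr IH.
rewrite eq_inl -(inj_eq val_inj) (val_bpar_r A pc hr).
apply/eqP/eqP => [/hu //|e]; have e' : val x = r := e; by rewrite e' hr.
Qed.

Lemma L2 s : all child s -> forall y : VL (Lb s), bval y != r ->
  exists2 c, c \in s & anc (ltp t) c (bval y).
Proof.
elim: s => [|c s IH] /=; first by move=> _ [].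
move=> /andP[hc hs] [x|y] /= hy.
  exists c; first by rewrite inE eqxx.
  by case: (inBr A x) => // e; rewrite e eqxx in hy.
have [c' h1 h2] := IH hs y hy; exists c' => //; by rewrite inE h1 orbT.
Qed.

Lemma L3 s : all child s -> forall y : VL (Lb s), bval (qL y) = ltp t (bval y).
Proof.
elim: s => [|c s IH] /=; first by move=> _ [].
move=> /andP[/andP[hc /eqP pc] hs] [x|y] /=; last by rewrite IH.
exact: (val_bpar_r A pc hr).
Qed.

Lemma L4 s : all child s -> forall c v, c \in s -> anc (ltp t) c v ->
  exists y : VL (Lb s), bval y = v.
Proof.
elim: s => [|c s IH] //= /andP[hc hs] c' v; rewrite inE => /orP[/eqP e|hin] ha.
  subst c'.
  have hv : v \in branch_set (ltp t) r c.
    by rewrite unfold_in /branch_set; apply/orP; right; apply/(descP' A).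
  by exists (inl (Sub v hv)).
have [y hy] := IH hs c' v hin ha; by exists (inr y).
Qed.

Lemma L5 s : all child s -> uniq s -> forall y1 y2 : VL (Lb s),
  bval y1 != r -> bval y2 != r -> bval y1 = bval y2 -> y1 = y2.
Proof.
elim: s => [|c s IH] /=; first by move=> _ _ [].
move=> /andP[hc hs] /andP[hcs us].
have key : forall (x : ltV (branch t r c)) (y : VL (Lb s)),
    bval y != r -> val x != r -> val x <> bval y.
  move=> x y hy hx e.
  have [c' hc' ha'] := L2 hs hy.
  have ha : anc (ltp t) c (val x) by case: (inBr A x) => // e'; rewrite e' eqxx in hx.
  have cc : c = c'.
    apply: (child_anc hc _ ha); last by rewrite e.
    by move/allP: hs => /(_ c' hc').
  by move: hcs; rewrite cc hc'.
move=> [x1|y1] [x2|y2] /= h1 h2 e.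
- by congr inl; apply: val_inj.
- by case: (key x1 y2 h2 h1 e).
- by case: (key x2 y1 h1 h2 (esym e)).
- by congr inr; apply: IH.
Qed.

Lemma iso_branches s : all child s -> uniq s -> (forall c, child c -> c \in s) ->
  poset_iso (Gposet (@qL (Lb s))) (Gposet (@qL [:: t])).
Proof.
move=> hs us hall.
apply: (@iso_GD _ _ _ _ (fun y => inl (bval y))).
- move=> w hw /=; rewrite eq_inl.
  apply: contra_neq hw => /hu e; apply/eqP; by rewrite (L1 hs) e.
- move=> w1 w2 h1 h2 [e]; apply: (L5 hs us) => //; by rewrite -(L1 hs).
- move=> [a|[]] /=; rewrite eq_inl => ha.
  have har : a != r by apply: contraNneq ha => ->; rewrite hr.
  have [c [hc hac]] := top_anc har.
  have [y hy] := L4 hs (hall c hc) hac.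
  exists y; last by rewrite hy.
  by rewrite (L1 hs) hy.
- by move=> w hw hw2 /=; rewrite (L3 hs).
move=> w hw e /=.
have := (L1 hs (qL w)); rewrite e eqxx (L3 hs) => /esym/eqP ->.
by rewrite hr.
Qed.
End Branches.

End Part12.
Import Part12.

Import GRing.Theory Num.Theory.
Local Open Scope ring_scope.

Lemma nAut_gt0 (I : finType) (p : {ffun I -> I}) : (0 < nAut p)%N.
Proof.
apply/card_gt0P; exists 1%g; rewrite inE; apply/forallP => x; by rewrite !perm1.
Qed.

Lemma nAut_neq0 (I : finType) (p : {ffun I -> I}) : (nAut p)%:R != 0 :> rat.
Proof. by rewrite pnatr_eq0 -lt0n nAut_gt0. Qed.

Lemma all_forest {L} : all tree L -> all (fun t => is_forest (ltp t)) L.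
Proof. elim: L => //= t L IH /andP[/andP[F _] T]; by rewrite F IH. Qed.

Theorem lemma6p12 (f : ltree -> rat) :
  in_GNAP f ->
  (in_image_SpecHNAP f <->
   (forall (t : ltree) (r : ltV t), tree t -> ltp t r = r ->
      (nAut (ltp t))%:R * f t =
      \prod_(c : ltV t | (c != r) && (ltp t c == r))
         ((nAut (ltp (branch t r c)))%:R * f (branch t r c)))).
Proof.
move=> hf; split.
  move=> [chi [[c0 cmul ciso] hchi]] t r Tt hr.
  have Htree : forall c, child r c -> tree (branch t r c).
    move=> c /andP[hc /eqP pc].
    have hc' : ltp t c != c by rewrite pc eq_sym.
    have tc : topb (ltp t) c by rewrite /topb pc hr.
    by have := branch_tree Tt hc' tc; rewrite pc.
  rewrite hchi // mulrC divfK ?nAut_neq0 //.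
  under eq_bigr => c hc do rewrite hchi ?Htree // mulrC divfK ?nAut_neq0 //.
  set s := enum (child r).
  have hs : all (child r) s by apply/allP => c; rewrite mem_enum.
  have TL : all tree (Lb r s).
    rewrite /Lb all_map; apply/allP => c hc /=; apply: Htree; move: hc; by rewrite mem_enum.
  have e1 : chi (Lb r s) = \prod_(c <- s) chi [:: branch t r c].
    have : all tree (Lb r s) by [].
    rewrite /Lb; elim: s {hs TL} => [|c s' IH] /=; first by rewrite big_nil.
    move=> /andP[Tb Ts]; rewrite big_cons -IH // -cmul //=; by rewrite Tb.
  have e2 : \prod_(c <- s) chi [:: branch t r c] =
            \prod_(c | (c != r) && (ltp t c == r)) chi [:: branch t r c].
    by rewrite big_enum; apply: eq_bigl => c.
  rewrite -e2 -e1; apply: ciso => //=; first by rewrite Tt.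
  apply: iso_trans (iso_PL (@all_forest [:: t] _)) _; first by rewrite /= Tt.
  apply: iso_trans (iso_sym (iso_branches Tt hr hs (enum_uniq _) _)) _.
    by move=> c; rewrite mem_enum.
  exact: iso_sym (iso_PL (all_forest TL)).
move=> Hc.
exists (fun L => \prod_(t <- L) vv f t); split; last first.
  by move=> t Tt; rewrite big_seq1 /vv mulrAC divff ?nAut_neq0 ?mul1r.
split.
- by rewrite big_nil.
- by move=> L1 L2 _ _; rewrite big_cat.
move=> L1 L2 T1 T2 I.
rewrite (chi_VL Hc T1) (chi_VL Hc T2); apply: (prod_iso hf T1 T2).
apply: iso_trans (iso_sym (iso_PL (all_forest T1))) _.
exact: iso_trans I (iso_PL (all_forest T2)).
Qed.
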